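(* The preordering associated with the box $[-1,1]^n$ is included in the quadratic module of the unit ball. In particular, for every $d\in\mathbb N$, $$\mathcal O_d(1\pm X_i: i\in\{1,\dots,n\})\subset\mathcal Q_{d+n}(1-\|\mathbf X\|_2^2).$$
   Context: $\Sigma^2$ is the cone of sums of squares in $\mathbb R[X_1,\dots,X_n]$, $\|\mathbf X\|_2^2=\sum X_i^2$. For polynomials $h_1,\dots,h_k$: $\mathcal Q(h_1,\dots,h_k)=\Sigma^2+\sum_j\Sigma^2h_j$, $\mathcal Q_d(h_1,\dots,h_k)=\{s_0+\sum_js_jh_j: s_j\in\Sigma^2,\deg s_0\le d,\deg(s_jh_j)\le d\}$; the preordering is $\mathcal O(h_1,\dots,h_k)=\mathcal Q(\prod_{j\in J}h_j: J\subset\{1,\dots,k\})$ and $\mathcal O_d(h_1,\dots,h_k)=\mathcal Q_d(\prod_{j\in J}h_j:J\subset\{1,\dots,k\})$. Here the $2n$ generators are $1+X_i$ and $1-X_i$, $i=1,\dots,n$. *)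

(* Defs.v *)
From HB Require Import structures.
From mathcomp Require Import all_boot all_order all_algebra.
From mathcomp Require Import reals.
From mathcomp Require Import mpoly.
Set Implicit Arguments. Unset Strict Implicit. Unset Printing Implicit Defensive.
Import Order.TTheory GRing.Theory Num.Theory.
Local Open Scope ring_scope.

Section Defs.
Variables (R : realType) (n : nat).

Definition sos (p : {mpoly R[n]}) : Prop :=
  exists s : seq {mpoly R[n]}, p = \sum_(q <- s) q ^+ 2.

(* Truncated quadratic module Q_d(h_j : j in I), for a finite family of
   generators h indexed by a finite type I.  "deg f <= d" is rendered as
   msize f <= d.+1 (msize = 1 + total degree, msize 0 = 0, so the zero
   polynomial has degree -oo and always qualifies). *)
Definition QM_d (I : finType) (h : I -> {mpoly R[n]}) (d : nat)
    (p : {mpoly R[n]}) : Prop :=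
  exists (s0 : {mpoly R[n]}) (s : I -> {mpoly R[n]}),
    [/\ sos s0, (forall j, sos (s j)),
        (msize s0 <= d.+1)%N,
        (forall j, msize (s j * h j) <= d.+1)%N &
        p = s0 + \sum_(j : I) s j * h j].

Definition QM (I : finType) (h : I -> {mpoly R[n]}) (p : {mpoly R[n]}) : Prop :=
  exists (s0 : {mpoly R[n]}) (s : I -> {mpoly R[n]}),
    [/\ sos s0, (forall j, sos (s j)) & p = s0 + \sum_(j : I) s j * h j].

Definition subset_prods (I : finType) (h : I -> {mpoly R[n]})
  : {set I} -> {mpoly R[n]} := fun J => \prod_(j in J) h j.

Definition PO (I : finType) (h : I -> {mpoly R[n]}) : {mpoly R[n]} -> Prop :=
  QM (subset_prods h).
Definition PO_d (I : finType) (h : I -> {mpoly R[n]}) (d : nat)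
  : {mpoly R[n]} -> Prop := QM_d (subset_prods h) d.

Definition box_gen (ib : 'I_n * bool) : {mpoly R[n]} :=
  if ib.2 then 1 + 'X_ib.1 else 1 - 'X_ib.1.

Definition ball_gen (_ : unit) : {mpoly R[n]} :=
  1 - \sum_(i < n) 'X_i ^+ 2.

End Defs.

(* Main.v *)
Require Import Defs.
From HB Require Import structures.
From mathcomp Require Import all_boot all_order all_algebra.
From mathcomp Require Import reals.
From mathcomp Require Import mpoly.
From mathcomp Require Import ring zify.
Import Order.TTheory GRing.Theory Num.Theory.
Local Open Scope ring_scope.

Section Aux.
Variables (R : realType) (n : nat).
Local Notation P := {mpoly R[n]}.

Lemma sos0 : sos (0 : P).
Proof. by exists [::]; rewrite big_nil. Qed.

Lemma sos_sq (p : P) : sos (p ^+ 2).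
Proof. by exists [:: p]; rewrite big_seq1. Qed.

Lemma sosD (a b : P) : sos a -> sos b -> sos (a + b).
Proof. by move=> [s1 ->] [s2 ->]; exists (s1 ++ s2); rewrite big_cat. Qed.

Lemma sosM (a b : P) : sos a -> sos b -> sos (a * b).
Proof.
move=> [s1 ->] [s2 ->]; exists [seq x * y | x <- s1, y <- s2].
rewrite big_allpairs_dep mulr_suml; apply: eq_bigr => x _.
rewrite mulr_sumr; apply: eq_bigr => y _; by rewrite exprMn.
Qed.

Lemma sos1 : sos (1 : P).
Proof. by rewrite -(expr1n _ 2); apply: sos_sq. Qed.

Lemma msizeM_le' (p q : P) : (msize (p * q) <= (msize p + msize q).-1)%N.
Proof.
have [->|p0] := eqVneq p 0; first by rewrite mul0r msize0.
have [->|q0] := eqVneq q 0; first by rewrite mulr0 msize0.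
by rewrite msizeM.
Qed.

Lemma msizeM_bnd (p q : P) a b : (msize p <= a.+1)%N -> (msize q <= b.+1)%N ->
  (msize (p * q) <= (a + b).+1)%N.
Proof. move=> hp hq; apply: leq_trans (msizeM_le' p q) _; lia. Qed.

Definition q0 : P := ball_gen R n tt.

Definition good (D : nat) (g : P) : Prop :=
  exists s t : P, [/\ sos s, sos t, (msize s <= D.+1)%N,
     (msize (t * q0) <= D.+1)%N & g = s + t * q0].

Lemma good_mono D D' g : (D <= D')%N -> good D g -> good D' g.
Proof.
move=> hD [s [t [h1 h2 h3 h4 h5]]]; exists s, t; split => //;
  apply: leq_trans; eauto.
Qed.

Lemma good_sos g : sos g -> good (msize g).-1 g.
Proof.
move=> hg; exists g, 0; split => //; first exact: sos0.
- by rewrite leqSpred.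
- by rewrite mul0r msize0.
- by rewrite mul0r addr0.
Qed.

Lemma good0 D : good D 0.
Proof.
apply: (@good_mono 0 D) => //; have := @good_sos 0 (@sos0); by rewrite msize0.
Qed.

Lemma goodD D a b : good D a -> good D b -> good D (a + b).
Proof.
move=> [s1 [t1 [h1 h2 h3 h4 ->]]] [s2 [t2 [k1 k2 k3 k4 ->]]].
exists (s1 + s2), (t1 + t2); split.
- exact: sosD.
- exact: sosD.
- by apply: leq_trans (msizeD_le _ _) _; rewrite geq_max h3.
- by rewrite mulrDl; apply: leq_trans (msizeD_le _ _) _; rewrite geq_max h4.
- by rewrite mulrDl; ring.
Qed.

Lemma goodM D1 D2 a b : good D1 a -> good D2 b -> good (D1 + D2) (a * b).
Proof.
move=> [s1 [t1 [h1 h2 h3 h4 ->]]] [s2 [t2 [k1 k2 k3 k4 ->]]].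
exists (s1 * s2 + (t1 * t2) * q0 ^+ 2), (s1 * t2 + s2 * t1); split.
- by apply: sosD; [exact: sosM | apply: sosM; [exact: sosM|exact: sos_sq]].
- by apply: sosD; exact: sosM.
- apply: leq_trans (msizeD_le _ _) _; rewrite geq_max msizeM_bnd //.
  have -> : t1 * t2 * q0 ^+ 2 = (t1 * q0) * (t2 * q0) by ring.
  exact: msizeM_bnd.
- rewrite mulrDl; apply: leq_trans (msizeD_le _ _) _; rewrite geq_max.
  rewrite -mulrA msizeM_bnd //= -mulrA addnC msizeM_bnd //.
- ring.
Qed.


Lemma msize_sum_bnd (I : Type) (r : seq I) (Pr : pred I) (F : I -> P) b :
  (forall i, Pr i -> msize (F i) <= b)%N -> (msize (\sum_(i <- r | Pr i) F i) <= b)%N.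
Proof.
move=> h; apply: (big_ind (fun x : P => msize x <= b)%N) => //.
- by rewrite msize0.
- by move=> x y hx hy; apply: leq_trans (msizeD_le _ _) _; rewrite geq_max hx.
Qed.

Lemma sos_sum (I : Type) (r : seq I) (Pr : pred I) (F : I -> P) :
  (forall i, Pr i -> sos (F i)) -> sos (\sum_(i <- r | Pr i) F i).
Proof.
move=> h; apply: (big_ind (fun x : P => sos x)) => //; [exact: sos0 | exact: sosD].
Qed.

Lemma msizeXi (k : 'I_n) : msize ('X_k : P) = 2%N.
Proof. by rewrite msizeX mdeg1. Qed.

Lemma msizeX2 (k : 'I_n) : (msize ('X_k ^+ 2 : P) <= 3)%N.
Proof. by rewrite expr2; apply: (@msizeM_bnd _ _ 1 1); rewrite msizeXi. Qed.

Definition Sp (i : 'I_n) : P := \sum_(k < n | k != i) 'X_k ^+ 2.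

Lemma sos_Sp i : sos (Sp i).
Proof. by apply: sos_sum => k _; exact: sos_sq. Qed.

Lemma msize_Sp i : (msize (Sp i) <= 3)%N.
Proof. by apply: msize_sum_bnd => k _; exact: msizeX2. Qed.

Lemma q0E i : q0 = 1 - ('X_i ^+ 2 + Sp i).
Proof. by rewrite /q0 /ball_gen (bigD1 i). Qed.

Lemma msize_q0 : (msize q0 <= 3)%N.
Proof.
rewrite /q0 /ball_gen; apply: leq_trans (msizeD_le _ _) _.
rewrite geq_max msize1 msizeN /=; apply: msize_sum_bnd => k _; exact: msizeX2.
Qed.

Lemma msizeC_le (c : R) : (msize (c%:MP : P) <= 1)%N.
Proof. by rewrite msizeC; case: (c != 0). Qed.

Lemma good_lin (i : 'I_n) (Y : P) : Y ^+ 2 = 'X_i ^+ 2 -> (msize Y <= 2)%N ->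
  good 2 (1 + Y).
Proof.
move=> hY hs.
pose c : P := (Num.sqrt (2^-1 : R))%:MP ^+ 2.
have hc : c * 2 = 1.
  rewrite /c -rmorphXn sqr_sqrtr ?invr_ge0 ?ler0n //.
  by rewrite -(rmorph_nat (@mpolyC n R) 2) -rmorphM mulVf ?pnatr_eq0 // rmorph1.
have h1Y : (msize (1 + Y) <= 2)%N.
  by apply: leq_trans (msizeD_le _ _) _; rewrite geq_max msize1.
exists (c * ((1 + Y) ^+ 2 + Sp i)), c; split.
- by apply: sosM; [exact: sos_sq | apply: sosD; [exact: sos_sq | exact: sos_Sp]].
- exact: sos_sq.
- apply: (@msizeM_bnd _ _ 0 2); first by rewrite /c -rmorphXn; exact: msizeC_le.
  apply: leq_trans (msizeD_le _ _) _; rewrite geq_max msize_Sp andbT.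
  by rewrite expr2; apply: (@msizeM_bnd _ _ 1 1).
- apply: (@msizeM_bnd _ _ 0 2); last exact: msize_q0.
  by rewrite /c -rmorphXn; exact: msizeC_le.
- rewrite (q0E i).
  have e : (1 + Y) ^+ 2 = 1 + 2 * Y + 'X_i ^+ 2 by rewrite -hY; ring.
  rewrite e; transitivity ((c * 2) * (1 + Y)); first by rewrite hc mul1r.
  ring.
Qed.

Lemma good_quad (i : 'I_n) : good 2 ((1 + 'X_i) * (1 - 'X_i)).
Proof.
exists (Sp i), 1; split.
- exact: sos_Sp.
- exact: sos1.
- exact: msize_Sp.
- by rewrite mul1r msize_q0.
- rewrite (q0E i); ring.
Qed.

Lemma msize_ge2 (i : 'I_n) (Y : P) : Y@_(mnm1 i) != 0 -> (2 <= msize (1 + Y))%N.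
Proof.
move=> hY.
have hU : ((mnm1 i) == 0%MM) = false by apply/negbTE; rewrite -mdeg_eq0 mdeg1.
have h : (mnm1 i) \in msupp (1 + Y).
  by rewrite -[_ \in _]negbK -mcoeff_eq0 mcoeffD mcoeff1 hU add0r.
by have := msize_mdeg_lt h; rewrite mdeg1.
Qed.

Lemma neq0_of_ge2 (p : P) : (2 <= msize p)%N -> p != 0.
Proof. by move=> h; apply/negP => /eqP hp; move: h; rewrite hp msize0. Qed.

Lemma msize_gt0 (p : P) : p != 0 -> (0 < msize p)%N.
Proof. by move=> h; rewrite lt0n msize_poly_eq0. Qed.

Definition fac (J : {set 'I_n * bool}) (i : 'I_n) : P :=
  (if (i, true) \in J then 1 + 'X_i else 1) *
  (if (i, false) \in J then 1 - 'X_i else 1).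

Lemma ge2_plus (i : 'I_n) : (2 <= msize (1 + 'X_i : P))%N.
Proof. by apply: (@msize_ge2 i); rewrite mcoeffXU eqxx oner_neq0. Qed.

Lemma ge2_minus (i : 'I_n) : (2 <= msize (1 - 'X_i : P))%N.
Proof.
by apply: (@msize_ge2 i); rewrite mcoeffN mcoeffXU eqxx oppr_eq0 oner_neq0.
Qed.

Lemma fac_good J i :
  exists D, [/\ good D (fac J i), (D <= msize (fac J i))%N & fac J i != 0].
Proof.
rewrite /fac; case: ((i, true) \in J); case: ((i, false) \in J).
- exists 2%N; split; first exact: good_quad.
  + rewrite msizeM ?neq0_of_ge2 ?ge2_plus ?ge2_minus //.
    move: (ge2_plus i) (ge2_minus i); move: (msize (1 + _ : P)) (msize (1 - _ : P)) => a b; lia.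
  + by rewrite mulf_neq0 // neq0_of_ge2 ?ge2_plus ?ge2_minus.
- rewrite mulr1; exists 2%N; split; last by rewrite neq0_of_ge2 ?ge2_plus.
  + apply: (@good_lin i) => //; by rewrite msizeXi.
  + exact: ge2_plus.
- rewrite mul1r; exists 2%N; split; last by rewrite neq0_of_ge2 ?ge2_minus.
  + apply: (@good_lin i); first by rewrite sqrrN.
    by rewrite msizeN msizeXi.
  + exact: ge2_minus.
- rewrite mulr1; exists 0%N; split => //; last exact: oner_neq0.
  by have := @good_sos 1 sos1; rewrite msize1.
Qed.

Lemma prod_good (r : seq 'I_n) (F : 'I_n -> P) :
  (forall i, exists D, [/\ good D (F i), (D <= msize (F i))%N & F i != 0]) ->
  exists D, [/\ good D (\prod_(i <- r) F i),
     (D <= (msize (\prod_(i <- r) F i)).-1 + size r)%N &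
     \prod_(i <- r) F i != 0].
Proof.
move=> hF; elim: r => [|a r [Dr [g1 g2 g3]]].
  exists 0%N; rewrite big_nil; split => //; last exact: oner_neq0.
  by have := @good_sos 1 sos1; rewrite msize1.
have [Da [h1 h2 h3]] := hF a.
exists (Da + Dr)%N; rewrite big_cons; split.
- exact: goodM.
- rewrite msizeM //=; move: (@msize_gt0 _ h3) (@msize_gt0 _ g3) h2 g2.
  move: (msize (F a)) (msize (\prod_(i <- r) F i)) => x y; lia.
- exact: mulf_neq0.
Qed.

Lemma prods_fac J : subset_prods (@box_gen R n) J = \prod_(i < n) fac J i.
Proof.
rewrite /subset_prods big_mkcond.
transitivity (\prod_(i < n) \prod_(b : bool)
    (if (i, b) \in J then @box_gen R n (i, b) else 1 : P)).
  by rewrite pair_big; apply: eq_big => // -[i b].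
by apply: eq_bigr => i _; rewrite big_bool /fac /box_gen.
Qed.

Lemma prods_good J : exists D, [/\ good D (subset_prods (@box_gen R n) J),
  (D <= (msize (subset_prods (@box_gen R n) J)).-1 + n)%N &
  subset_prods (@box_gen R n) J != 0].
Proof.
have [D [h1 h2 h3]] := @prod_good (index_enum 'I_n) (fac J) (@fac_good J).
exists D; rewrite prods_fac; split => //.
by move: h2; rewrite /index_enum -enumT size_enum_ord.
Qed.

Lemma good_QM D p : good D p -> QM_d (@ball_gen R n) D p.
Proof.
move=> [s [t [h1 h2 h3 h4 ->]]]; exists s, (fun _ => t); split => //; try by move=> [].
by rewrite (bigD1 tt) //= big_pred0 ?addr0 // => -[].
Qed.

Lemma part2 d p : PO_d (@box_gen R n) d p -> QM_d (@ball_gen R n) (d + n) p.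
Proof.
move=> [s0 [s [h1 h2 h3 h4 ->]]]; apply: good_QM; apply: goodD.
  apply: (good_mono _ _ _ _ (good_sos _ h1)); move: h3; move: (msize s0) => x; lia.
apply: (big_ind (good (d + n))) => //; [exact: good0 | exact: goodD |].
move=> J _; have [->|sJ0] := eqVneq (s J) 0; first by rewrite mul0r; exact: good0.
have [D [g1 g2 g3]] := prods_good J.
apply: (good_mono _ _ _ _ (goodM _ _ _ _ (good_sos _ (h2 J)) g1)).
move: (h4 J); rewrite msizeM //.
move: (@msize_gt0 _ sJ0) (@msize_gt0 _ g3) g2.
move: (msize (s J)) (msize (subset_prods (@box_gen R n) J)) => x y; lia.
Qed.

Lemma part1 p : PO (@box_gen R n) p -> QM (@ball_gen R n) p.
Proof.
move=> [s0 [s [h1 h2 hp]]].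
pose d := maxn (msize s0) (\max_(J : {set 'I_n * bool})
   msize (s J * subset_prods (@box_gen R n) J)).
have : PO_d (@box_gen R n) d p.
  exists s0, s; split => //.
  - by apply: leqW; rewrite leq_maxl.
  - move=> J; apply: leqW; apply: leq_trans (leq_maxr _ _).
    exact: (leq_bigmax_cond (F := fun J => msize (s J * subset_prods (@box_gen R n) J))).
move/part2 => [t0 [t [k1 k2 _ _ ->]]]; by exists t0, t.
Qed.

End Aux.

Theorem mainTheorem13 (R : realType) (n : nat) :
  (forall p : {mpoly R[n]}, PO (@box_gen R n) p -> QM (@ball_gen R n) p) /\
  (forall (d : nat) (p : {mpoly R[n]}),
     PO_d (@box_gen R n) d p -> QM_d (@ball_gen R n) (d + n) p).
Proof. split; [exact: part1 | exact: part2]. Qed.
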